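(* Let $f_0$ be a positive integer. There exists a toric line arrangement in $\mathbb{T}^2$ consisting of exactly $3$ lines with $f_0$ vertices and $f_2=f_0$ chambers if and only if $f_0\ge 2$.
   Context: Let $\mathbb{T}^2=\mathbb{R}^2/\mathbb{Z}^2$ with quotient map $\pi:\mathbb{R}^2\to\mathbb{T}^2$. A toric line is the image $\pi(L)$ of a line $L=\{(x,y)\in\mathbb{R}^2: ax+by=c\}$ with $a,b\in\mathbb{Z}$ coprime and $c\in\mathbb{R}$; it is said to be of type $(a,b)$. A toric line arrangement is a finite set $\mathcal{A}=\{l_1,\dots,l_n\}$ of distinct toric lines which is essential, i.e. not all of its lines are of the same type (not all lines are parallel). The vertices of $\mathcal{A}$ are the points of $\mathbb{T}^2$ lying on at least two lines of $\mathcal{A}$; the chambers are the connected components of $\mathbb{T}^2\setminus\bigcup_i l_i$. We write $f_0$ and $f_2$ for the numbers of vertices and chambers. *)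

(* Defs.v *)
(* real plane R^2, torus T^2 = R^2 / Z^2 encoded via Z^2-invariant subsets. *)
From Stdlib Require Import Reals ZArith List.
Open Scope R_scope.

Definition pt : Type := (R * R)%type.

Definition shift (p : pt) (m n : Z) : pt := (fst p + IZR m, snd p + IZR n).

Definition tor_eq (p q : pt) : Prop := exists m n : Z, p = shift q m n.

Record line : Type := Line { la : Z; lb : Z; lc : R; lcop : Z.gcd la lb = 1%Z }.

Definition on_line (l : line) (p : pt) : Prop :=
  exists m n : Z, IZR (la l) * fst (shift p m n) + IZR (lb l) * snd (shift p m n) = lc l.

Definition same_toric_line (l l' : line) : Prop := forall p, on_line l p <-> on_line l' p.

(* same type (a,b), types being defined up to sign since (a,b,c) and (-a,-b,-c)
   define the same line *)
Definition same_type (l l' : line) : Prop :=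
  (la l = la l' /\ lb l = lb l') \/ (la l = (- la l')%Z /\ lb l = (- lb l')%Z).

Definition distinct_lines (A : list line) : Prop :=
  ForallOrdPairs (fun l l' => ~ same_toric_line l l') A.

Definition essential (A : list line) : Prop :=
  exists l l', In l A /\ In l' A /\ ~ same_type l l'.

Definition toric_arrangement (A : list line) : Prop := distinct_lines A /\ essential A.

Definition vertex (A : list line) (p : pt) : Prop :=
  exists l l', In l A /\ In l' A /\ ~ same_toric_line l l' /\ on_line l p /\ on_line l' p.

Definition in_compl (A : list line) (p : pt) : Prop :=
  forall l, In l A -> ~ on_line l p.

Definition invariant (S : pt -> Prop) : Prop :=
  forall p m n, S p <-> S (shift p m n).

(* open subsets of R^2 (quotient topology: a subset of T^2 is open iff its
   preimage is open in R^2) *)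
Definition open2 (U : pt -> Prop) : Prop :=
  forall p, U p -> exists eps, 0 < eps /\
    forall q, Rabs (fst q - fst p) < eps -> Rabs (snd q - snd p) < eps -> U q.

Definition torus_connected (S : pt -> Prop) : Prop :=
  invariant S /\
  ~ (exists U V : pt -> Prop,
        invariant U /\ invariant V /\ open2 U /\ open2 V /\
        (forall p, S p -> U p \/ V p) /\
        (forall p, S p -> U p -> V p -> False) /\
        (exists p, S p /\ U p) /\ (exists p, S p /\ V p)).

Definition same_chamber (A : list line) (p q : pt) : Prop :=
  exists S : pt -> Prop, torus_connected S /\ (forall x, S x -> in_compl A x) /\ S p /\ S q.

Definition num_classes (P : pt -> Prop) (E : pt -> pt -> Prop) (k : nat) : Prop :=
  exists s : list pt, length s = k /\ Forall P s /\
    ForallOrdPairs (fun x y => ~ E x y) s /\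
    (forall p, P p -> exists q, In q s /\ E p q).

Definition f0_is (A : list line) (k : nat) : Prop := num_classes (vertex A) tor_eq k.
Definition f2_is (A : list line) (k : nat) : Prop := num_classes (in_compl A) (same_chamber A) k.

(* Main.v *)
Require Import Defs.
From Stdlib Require Import Reals ZArith List.
From Stdlib Require Import Lra Lia Classical.
Require Import Defs.
Open Scope R_scope.

Definition fl (x : R) : Z := (up x - 1)%Z.

Lemma fl_spec x : IZR (fl x) <= x < IZR (fl x) + 1.
Proof. unfold fl. rewrite minus_IZR. destruct (archimed x). lra. Qed.

Lemma int_between f z x : IZR f < x < IZR f + 1 -> x <> IZR z.
Proof.
  intros [H1 H2] ->. apply lt_IZR in H1. rewrite <- plus_IZR in H2.
  apply lt_IZR in H2. lia.
Qed.

Lemma fl_unique z x : IZR z <= x < IZR z + 1 -> fl x = z.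
Proof.
  intros [H1 H2]. destruct (fl_spec x) as [G1 G2].
  assert (IZR z < IZR (fl x) + 1) as A by lra.
  assert (IZR (fl x) < IZR z + 1) as B by lra.
  rewrite <- plus_IZR in A, B. apply lt_IZR in A. apply lt_IZR in B. lia.
Qed.

Lemma fl_shift x z : fl (x + IZR z) = (fl x + z)%Z.
Proof. apply fl_unique. rewrite plus_IZR. destruct (fl_spec x). lra. Qed.

Lemma fl_strict x : (forall z, x <> IZR z) -> IZR (fl x) < x < IZR (fl x) + 1.
Proof. intros H. destruct (fl_spec x). split; [|lra].
  destruct H0; [lra|]. exfalso; apply (H (fl x)); auto. Qed.

Definition tt (l : line) (p : pt) : R :=
  IZR (la l) * fst p + IZR (lb l) * snd p - lc l.

Lemma tt_shift l p m n : tt l (shift p m n) = tt l p + IZR (la l * m + lb l * n).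
Proof. unfold tt, shift; simpl. rewrite plus_IZR, !mult_IZR. ring. Qed.

Lemma on_line_iff l p : on_line l p <-> exists z, tt l p = IZR z.
Proof.
  split.
  - intros [m [n H]]. exists (- (la l * m + lb l * n))%Z.
    rewrite opp_IZR, plus_IZR, !mult_IZR. unfold tt. unfold shift in H; simpl in H. lra.
  - intros [z Hz]. destruct (Z.gcd_bezout _ _ _ (lcop l)) as [u [v Huv]].
    exists (- z * u)%Z, (- z * v)%Z.
    assert (E : IZR (u * la l + v * lb l) = 1) by (rewrite Huv; reflexivity).
    rewrite plus_IZR, !mult_IZR in E.
    unfold tt in Hz. unfold shift; simpl. rewrite !mult_IZR, opp_IZR.
    replace (IZR (la l) * (fst p + - IZR z * IZR u) + IZR (lb l) * (snd p + - IZR z * IZR v))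
      with (IZR (la l) * fst p + IZR (lb l) * snd p - IZR z * (IZR u * IZR (la l) + IZR v * IZR (lb l))) by ring.
    rewrite E. lra.
Qed.

Lemma on_line_shift l p m n : on_line l (shift p m n) <-> on_line l p.
Proof.
  rewrite !on_line_iff, tt_shift. set (X := (la l * m + lb l * n)%Z). split; intros [z Hz].
  - exists (z - X)%Z. rewrite minus_IZR. set (Y := IZR X) in *. lra.
  - exists (z + X)%Z. rewrite plus_IZR. set (Y := IZR X) in *. lra.
Qed.

Lemma in_compl_shift A p m n : in_compl A (shift p m n) <-> in_compl A p.
Proof.
  unfold in_compl; split; intros H l Hl Hon; apply (H l Hl).
  - apply (proj2 (on_line_shift l p m n)); auto.
  - apply (proj1 (on_line_shift l p m n)); auto.
Qed.

Lemma not_on_line l p : ~ on_line l p -> IZR (fl (tt l p)) < tt l p < IZR (fl (tt l p)) + 1.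
Proof. intros H. apply fl_strict. intros z Hz. apply H, on_line_iff. eauto. Qed.

Lemma loc_line l p f : IZR f < tt l p < IZR f + 1 ->
  exists eps, 0 < eps /\ forall q, Rabs (fst q - fst p) < eps -> Rabs (snd q - snd p) < eps ->
    IZR f < tt l q < IZR f + 1.
Proof.
  intros [H1 H2].
  set (g := Rmin (tt l p - IZR f) (IZR f + 1 - tt l p)).
  assert (Hg : 0 < g) by (unfold g; apply Rmin_glb_lt; lra).
  set (K := Rabs (IZR (la l)) + Rabs (IZR (lb l)) + 1).
  assert (HK : 0 < K) by (unfold K; pose proof (Rabs_pos (IZR (la l))); pose proof (Rabs_pos (IZR (lb l))); lra).
  exists (g / K). split. { apply Rdiv_lt_0_compat; auto. }
  intros q Hx Hy.
  assert (D : tt l q - tt l p = IZR (la l) * (fst q - fst p) + IZR (lb l) * (snd q - snd p)) by (unfold tt; ring).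
  assert (B : Rabs (tt l q - tt l p) < g).
  { rewrite D. eapply Rle_lt_trans. apply Rabs_triang. rewrite !Rabs_mult.
    pose proof (Rabs_pos (IZR (la l))). pose proof (Rabs_pos (IZR (lb l))).
    pose proof (Rabs_pos (fst q - fst p)). pose proof (Rabs_pos (snd q - snd p)).
    assert (Rabs (IZR (la l)) * Rabs (fst q - fst p) <= Rabs (IZR (la l)) * (g/K)) by (apply Rmult_le_compat_l; lra).
    assert (Rabs (IZR (lb l)) * Rabs (snd q - snd p) <= Rabs (IZR (lb l)) * (g/K)) by (apply Rmult_le_compat_l; lra).
    assert (K * (g / K) = g) by (field; lra).
    assert (0 < g / K) by (apply Rdiv_lt_0_compat; auto).
    unfold K in *. nra. }
  assert (g <= tt l p - IZR f) by apply Rmin_l.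
  assert (g <= IZR f + 1 - tt l p) by apply Rmin_r.
  apply Rabs_def2 in B. lra.
Qed.

Lemma loc_list A p : in_compl A p ->
  exists eps, 0 < eps /\ forall q, Rabs (fst q - fst p) < eps -> Rabs (snd q - snd p) < eps ->
    forall l, In l A -> IZR (fl (tt l p)) < tt l q < IZR (fl (tt l p)) + 1.
Proof.
  induction A as [|l0 A IH]; intros Hc.
  - exists 1. split; [lra|]. intros q _ _ l [].
  - destruct IH as [e1 [He1 H1]]. { intros l Hl. apply Hc. right; auto. }
    destruct (loc_line l0 p (fl (tt l0 p))) as [e2 [He2 H2]].
    { apply not_on_line. apply Hc. left; auto. }
    exists (Rmin e1 e2). split. { apply Rmin_glb_lt; auto. }
    intros q Hx Hy l [<-|Hl].
    + apply H2; eapply Rlt_le_trans; eauto; apply Rmin_r.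
    + apply H1; auto; eapply Rlt_le_trans; eauto; apply Rmin_l.
Qed.

Lemma loc_const A p (H : pt -> Z) :
  (forall p q, (forall l, In l A -> fl (tt l q) = fl (tt l p)) -> H q = H p) ->
  in_compl A p ->
  exists eps, 0 < eps /\ forall q, Rabs (fst q - fst p) < eps -> Rabs (snd q - snd p) < eps ->
    in_compl A q /\ H q = H p.
Proof.
  intros HH Hc. destruct (loc_list A p Hc) as [e [He Hq]]. exists e. split; auto.
  intros q Hx Hy. specialize (Hq q Hx Hy). split.
  - intros l Hl Hon. apply on_line_iff in Hon. destruct Hon as [z Hz].
    eapply int_between; [apply Hq; eauto| eauto].
  - apply HH. intros l Hl. apply fl_unique. specialize (Hq l Hl). lra.
Qed.

Lemma sep A (H : pt -> Z) :
  (forall p m n, H (shift p m n) = H p) ->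
  (forall p q, (forall l, In l A -> fl (tt l q) = fl (tt l p)) -> H q = H p) ->
  forall S p q, torus_connected S -> (forall x, S x -> in_compl A x) -> S p -> S q -> H p = H q.
Proof.
  intros Hinv Hfl S p q [_ HS] HSc Sp Sq.
  destruct (Z.eq_dec (H p) (H q)) as [e|ne]; auto. exfalso. apply HS.
  exists (fun x => in_compl A x /\ H x = H p), (fun x => in_compl A x /\ H x <> H p).
  split; [|split; [|split; [|split; [|split; [|split; [|split]]]]]].
  - intros x m n. rewrite in_compl_shift, Hinv. tauto.
  - intros x m n. rewrite in_compl_shift, Hinv. tauto.
  - intros x [C E]. destruct (loc_const A x H Hfl C) as [e [He Hq]].
    exists e; split; auto. intros y H1 H2. destruct (Hq y H1 H2) as [Cy Ey]. split; [exact Cy|congruence].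
  - intros x [C E]. destruct (loc_const A x H Hfl C) as [e [He Hq]].
    exists e; split; auto. intros y H1 H2. destruct (Hq y H1 H2) as [Cy Ey]. split; [exact Cy|congruence].
  - intros x Sx. destruct (Z.eq_dec (H x) (H p)); [left|right]; split; auto.
  - intros x _ [_ E1] [_ E2]. auto.
  - exists p. repeat split; auto.
  - exists q. repeat split; auto.
Qed.


Definition seg (P Q : pt) (t : R) : pt :=
  (fst P + t * (fst Q - fst P), snd P + t * (snd Q - snd P)).

Lemma seg0 P Q : seg P Q 0 = P.
Proof. destruct P; unfold seg; simpl; f_equal; ring. Qed.
Lemma seg1 P Q : seg P Q 1 = Q.
Proof. destruct P, Q; unfold seg; simpl; f_equal; ring. Qed.

Lemma seg_near (W : pt -> Prop) P Q t0 : open2 W -> W (seg P Q t0) ->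
  exists d, 0 < d /\ forall s, Rabs (s - t0) < d -> W (seg P Q s).
Proof.
  intros HW Wt. destruct (HW _ Wt) as [e [He Hq]].
  set (K := Rabs (fst Q - fst P) + Rabs (snd Q - snd P) + 1).
  assert (HK : 0 < K) by (unfold K; pose proof (Rabs_pos (fst Q - fst P)); pose proof (Rabs_pos (snd Q - snd P)); lra).
  exists (e / K). split; [apply Rdiv_lt_0_compat; auto|].
  intros s Hs. apply Hq; unfold seg; simpl.
  - replace (fst P + s * (fst Q - fst P) - (fst P + t0 * (fst Q - fst P))) with ((s - t0) * (fst Q - fst P)) by ring.
    rewrite Rabs_mult. pose proof (Rabs_pos (s - t0)). pose proof (Rabs_pos (fst Q - fst P)).
    pose proof (Rabs_pos (snd Q - snd P)).
    assert (K * (e / K) = e) by (field; lra).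
    assert (Rabs (s - t0) * Rabs (fst Q - fst P) <= Rabs (s - t0) * K) by (apply Rmult_le_compat_l; unfold K; lra).
    assert (Rabs (s - t0) * K < (e / K) * K) by (apply Rmult_lt_compat_r; lra).
    lra.
  - replace (snd P + s * (snd Q - snd P) - (snd P + t0 * (snd Q - snd P))) with ((s - t0) * (snd Q - snd P)) by ring.
    rewrite Rabs_mult. pose proof (Rabs_pos (s - t0)). pose proof (Rabs_pos (fst Q - fst P)).
    pose proof (Rabs_pos (snd Q - snd P)).
    assert (K * (e / K) = e) by (field; lra).
    assert (Rabs (s - t0) * Rabs (snd Q - snd P) <= Rabs (s - t0) * K) by (apply Rmult_le_compat_l; unfold K; lra).
    assert (Rabs (s - t0) * K < (e / K) * K) by (apply Rmult_lt_compat_r; lra).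
    lra.
Qed.

Lemma seg_conn (U V : pt -> Prop) P Q : open2 U -> open2 V -> U P -> V Q ->
  (forall t, 0 <= t <= 1 -> U (seg P Q t) \/ V (seg P Q t)) ->
  (forall t, 0 <= t <= 1 -> U (seg P Q t) -> V (seg P Q t) -> False) -> False.
Proof.
  intros oU oV UP VQ Cov Dis.
  set (E := fun t => 0 <= t <= 1 /\ forall s, 0 <= s <= t -> U (seg P Q s)).
  assert (bE : bound E) by (exists 1; intros t [Ht _]; lra).
  assert (E0 : E 0).
  { split; [lra|]. intros s Hs. replace s with 0 by lra. rewrite seg0; auto. }
  destruct (completeness E bE (ex_intro _ 0 E0)) as [T [HT1 HT2]].
  assert (T0 : 0 <= T) by (apply HT1; auto).
  assert (T1 : T <= 1) by (apply HT2; intros t [Ht _]; lra).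
  assert (Close : forall d, 0 < d -> exists t, E t /\ T - d < t).
  { intros d Hd. apply NNPP. intros N.
    assert (T <= T - d); [|lra]. apply HT2. intros t Et.
    destruct (Rle_dec t (T - d)); auto. exfalso. apply N. exists t. split; auto; lra. }
  assert (Cv : U (seg P Q T) \/ V (seg P Q T)) by (apply Cov; lra).
  destruct Cv as [UT|VT].
  - destruct (seg_near U P Q T oU UT) as [d [Hd Hn]].
    destruct (Req_dec T 1) as [e1|n1].
    + apply (Dis 1); [lra| |rewrite seg1; auto]. rewrite <- e1; auto.
    + destruct (Close d Hd) as [t [[Ht Et] Htd]].
      set (t' := Rmin (T + d / 2) 1).
      assert (Hm : T < t') by (unfold t'; apply Rmin_glb_lt; lra).
      assert (t' <= T); [|lra].
      apply HT1. split.
      { unfold t'; split; [apply Rmin_case; lra| apply Rmin_r]. }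
      intros s Hs. destruct (Rle_dec s t).
      * apply Et; lra.
      * apply Hn. assert (t' <= T + d/2) by apply Rmin_l.
        assert (t <= T) by (apply HT1; split; auto).
        apply Rabs_def1; lra.
  - destruct (seg_near V P Q T oV VT) as [d [Hd Hn]].
    destruct (Close d Hd) as [t [[Ht Et] Htd]].
    assert (t <= T) by (apply HT1; split; auto).
    apply (Dis t Ht).
    + apply Et; lra.
    + apply Hn. apply Rabs_def1; lra.
Qed.


Lemma FOP_map_seq {A} (R : A -> A -> Prop) (f : nat -> A) n : forall a,
  (forall i j, (a <= i)%nat -> (i < j)%nat -> (j < a + n)%nat -> R (f i) (f j)) ->
  ForallOrdPairs R (map f (seq a n)).
Proof.
  induction n as [|n IH]; intros a H; simpl. constructor.
  constructor.
  - apply Forall_forall. intros y Hy. apply in_map_iff in Hy. destruct Hy as [j [<- Hj]].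
    apply in_seq in Hj. apply H; lia.
  - apply IH. intros i j Hi Hij Hj. apply H; lia.
Qed.

Lemma no_half z w : IZR z <> IZR w + 1/2.
Proof. intros E. apply (int_between w z (IZR w + 1/2)); [lra|auto]. Qed.

Definition L1 : line := Line 1 0 0 eq_refl.
Definition L2 : line := Line 0 1 0 eq_refl.
Definition L3 (m : nat) : line := Line 1 (Z.of_nat m) (1/2) (Z.gcd_1_l _).
Definition Arr (m : nat) : list line := L1 :: L2 :: L3 m :: nil.

Lemma tt_L1 p : tt L1 p = fst p. Proof. unfold tt; simpl; ring. Qed.
Lemma tt_L2 p : tt L2 p = snd p. Proof. unfold tt; simpl; ring. Qed.
Lemma tt_L3 m p : tt (L3 m) p = fst p + IZR (Z.of_nat m) * snd p - 1/2.
Proof. unfold tt; simpl; ring. Qed.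

Lemma fl_tt_shift l p a b : fl (tt l (shift p a b)) = (fl (tt l p) + (la l * a + lb l * b))%Z.
Proof. rewrite tt_shift, fl_shift. reflexivity. Qed.

Definition Idx (m : nat) (p : pt) : Z :=
  (fl (tt (L3 m) p) - Z.of_nat m * fl (tt L2 p) - fl (tt L1 p))%Z.

Lemma Idx_shift m p a b : Idx m (shift p a b) = Idx m p.
Proof. unfold Idx. rewrite !fl_tt_shift. simpl la; simpl lb. ring. Qed.

Lemma Idx_fl m p q : (forall l, In l (Arr m) -> fl (tt l q) = fl (tt l p)) -> Idx m q = Idx m p.
Proof.
  intros H. unfold Idx. rewrite (H L1), (H L2), (H (L3 m)); auto; simpl; auto.
Qed.

Definition Sj (m : nat) (j : Z) (x : pt) : Prop := in_compl (Arr m) x /\ Idx m x = j.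

Lemma box m j p : 0 < fst p < 1 -> 0 < snd p < 1 -> IZR j < tt (L3 m) p < IZR j + 1 -> Sj m j p.
Proof.
  intros Hx Hy H3. split.
  - intros l Hl Hon. apply on_line_iff in Hon. destruct Hon as [z Hz].
    simpl in Hl. destruct Hl as [<-|[<-|[<-|[]]]].
    + rewrite tt_L1 in Hz. apply (int_between 0 z (fst p)); auto. simpl; lra.
    + rewrite tt_L2 in Hz. apply (int_between 0 z (snd p)); auto. simpl; lra.
    + apply (int_between j z _ H3 Hz).
  - unfold Idx. rewrite (fl_unique 0 (tt L1 p)), (fl_unique 0 (tt L2 p)), (fl_unique j).
    + ring.
    + lra.
    + rewrite tt_L2; simpl; lra.
    + rewrite tt_L1; simpl; lra.
Qed.

Lemma reduce m j p : Sj m j p ->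
  0 < fst (shift p (- fl (tt L1 p)) (- fl (tt L2 p))) < 1 /\
  0 < snd (shift p (- fl (tt L1 p)) (- fl (tt L2 p))) < 1 /\
  IZR j < tt (L3 m) (shift p (- fl (tt L1 p)) (- fl (tt L2 p))) < IZR j + 1.
Proof.
  intros [C E].
  assert (H1 := not_on_line L1 p (C L1 (or_introl eq_refl))).
  assert (H2 := not_on_line L2 p (C L2 (or_intror (or_introl eq_refl)))).
  assert (H3 := not_on_line (L3 m) p (C (L3 m) (or_intror (or_intror (or_introl eq_refl))))).
  unfold Idx in E. rewrite tt_shift. simpl la; simpl lb.
  rewrite tt_L1 in H1, E |- *. rewrite tt_L2 in H2, E |- *.
  set (f1 := fl (fst p)) in *. set (f2 := fl (snd p)) in *.
  set (f3 := fl (tt (L3 m) p)) in *. set (t3 := tt (L3 m) p) in *.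
  assert (F3 : f3 = (j + Z.of_nat m * f2 + f1)%Z) by lia.
  rewrite F3 in H3. rewrite !plus_IZR, !mult_IZR in H3.
  unfold shift; cbn [fst snd]. rewrite plus_IZR, !mult_IZR, !opp_IZR.
  set (M := IZR (Z.of_nat m)) in *.
  set (F1 := IZR f1) in *. set (F2 := IZR f2) in *. set (J := IZR j) in *.
  clearbody M F1 F2 J t3. split; [lra|]. split; [lra|]. split; nra.
Qed.


Lemma Sj_shift m j x a b : Sj m j x <-> Sj m j (shift x a b).
Proof. unfold Sj. rewrite in_compl_shift, Idx_shift. tauto. Qed.

Lemma conv c d a b t : c < a < d -> c < b < d -> 0 <= t <= 1 -> c < a + t * (b - a) < d.
Proof. intros [H1 H2] [H3 H4] [H5 H6].
  assert (0 <= (1 - t) * (a - c)) by (apply Rmult_le_pos; lra).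
  assert (0 <= t * (b - c)) by (apply Rmult_le_pos; lra).
  assert (0 <= (1 - t) * (d - a)) by (apply Rmult_le_pos; lra).
  assert (0 <= t * (d - b)) by (apply Rmult_le_pos; lra).
  destruct (Req_dec t 0) as [->|Hn]; [split; lra|].
  assert (0 < t * (b - c)) by (apply Rmult_lt_0_compat; lra).
  assert (0 < t * (d - b)) by (apply Rmult_lt_0_compat; lra).
  split; nra. Qed.

Lemma Sj_conn m j : torus_connected (Sj m j).
Proof.
  split. { intros x a b. apply Sj_shift. }
  intros [U [V [iU [iV [oU [oV [Cov [Dis [[p [Sp Up]] [q [Sq Vq]]]]]]]]]]].
  set (p' := shift p (- fl (tt L1 p)) (- fl (tt L2 p))).
  set (q' := shift q (- fl (tt L1 q)) (- fl (tt L2 q))).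
  destruct (reduce m j p Sp) as [px [py pw]].
  destruct (reduce m j q Sq) as [qx [qy qw]].
  fold p' in px, py, pw. fold q' in qx, qy, qw.
  assert (Up' : U p') by (apply iU; auto).
  assert (Vq' : V q') by (apply iV; auto).
  clearbody p' q'. assert (InS : forall t, 0 <= t <= 1 -> Sj m j (seg p' q' t)).
  { intros t Ht. apply box; unfold seg; cbn [fst snd].
    - apply conv; auto.
    - apply conv; auto.
    - rewrite tt_L3 in *. cbn [fst snd].
      replace (fst p' + t * (fst q' - fst p') + IZR (Z.of_nat m) * (snd p' + t * (snd q' - snd p')) - 1 / 2)
        with ((1 - t) * (fst p' + IZR (Z.of_nat m) * snd p' - 1 / 2) + t * (fst q' + IZR (Z.of_nat m) * snd q' - 1 / 2)) by ring.
      set (a := fst p' + IZR (Z.of_nat m) * snd p' - 1 / 2) in *.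
      set (b := fst q' + IZR (Z.of_nat m) * snd q' - 1 / 2) in *.
      clearbody a b. replace ((1 - t) * a + t * b) with (a + t * (b - a)) by ring. apply conv; auto. }
  apply (seg_conn U V p' q' oU oV Up' Vq').
  - intros t Ht. apply Cov. auto.
  - intros t Ht. apply Dis. auto.
Qed.

Definition g (m J : nat) : pt :=
  ((INR J + 1/2) / (INR m + 2), (INR J + 1/2) / (INR m + 2)).

Lemma g_Sj m J : (J < m + 2)%nat -> Sj m (Z.of_nat J - 1) (g m J).
Proof.
  intros HJ. assert (HJ' : INR J <= INR m + 1).
  { rewrite <- S_INR. apply le_INR. lia. }
  pose proof (pos_INR J). pose proof (pos_INR m).
  assert (R0 : 0 < (INR J + 1/2) / (INR m + 2) < 1).
  { split. apply Rdiv_lt_0_compat; lra.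
    apply (Rmult_lt_reg_r (INR m + 2)); [lra|]. field_simplify; lra. }
  apply box; unfold g; cbn [fst snd]; auto.
  rewrite tt_L3; cbn [fst snd]. rewrite minus_IZR, <- !INR_IZR_INZ.
  set (r := (INR J + 1 / 2) / (INR m + 2)).
  assert (E : r + INR m * r - 1 / 2 = INR J - (INR J + 1/2) / (INR m + 2)) by (unfold r; field; lra).
  rewrite E. lra.
Qed.

Lemma Idx_range m p : in_compl (Arr m) p -> (-1 <= Idx m p <= Z.of_nat m)%Z.
Proof.
  intros C. assert (S : Sj m (Idx m p) p) by (split; auto).
  destruct (reduce m _ p S) as [px [py pw]].
  rewrite tt_L3 in pw. set (x := fst _) in *. set (y := snd _) in *.
  pose proof (pos_INR m). rewrite INR_IZR_INZ in H.
  set (M := IZR (Z.of_nat m)) in *. set (J := Idx m p) in *.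
  assert (IZR J < M + 1/2) by nra.
  assert (IZR J + 1 > -1/2) by nra.
  clearbody x y J. split.
  - assert (K : IZR (-2) < IZR J) by (simpl; lra). apply lt_IZR in K. lia.
  - assert (K : IZR J < IZR (Z.of_nat m + 1)) by (rewrite plus_IZR; fold M; simpl; lra). apply lt_IZR in K. lia.
Qed.

Lemma f2_Arr m : f2_is (Arr m) (m + 2).
Proof.
  exists (map (g m) (seq 0 (m + 2))). split; [|split; [|split]].
  - rewrite length_map, length_seq. auto.
  - apply Forall_forall. intros x Hx. apply in_map_iff in Hx. destruct Hx as [J [<- HJ]].
    apply in_seq in HJ. apply (g_Sj m J). lia.
  - apply FOP_map_seq. intros i J _ HiJ HJ. intros [S [cS [sub [Si SJ]]]].
    assert (E := sep (Arr m) (Idx m) (Idx_shift m) (Idx_fl m) S _ _ cS sub Si SJ).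
    rewrite (proj2 (g_Sj m i ltac:(lia))), (proj2 (g_Sj m J ltac:(lia))) in E. lia.
  - intros p C. destruct (Idx_range m p C) as [lo hi].
    exists (g m (Z.to_nat (Idx m p + 1))). split.
    + apply in_map. apply in_seq. lia.
    + exists (Sj m (Idx m p)). split; [apply Sj_conn|]. split; [intros x [Cx _]; auto|].
      split; [split; auto|].
      replace (Idx m p) with (Z.of_nat (Z.to_nat (Idx m p + 1)) - 1)%Z at 1 by lia.
      apply g_Sj. lia.
Qed.


Lemma onL1 p : on_line L1 p <-> exists z, fst p = IZR z.
Proof. rewrite on_line_iff, tt_L1. tauto. Qed.
Lemma onL2 p : on_line L2 p <-> exists z, snd p = IZR z.
Proof. rewrite on_line_iff, tt_L2. tauto. Qed.
Lemma onL3 m p : on_line (L3 m) p <-> exists z, fst p + IZR (Z.of_nat m) * snd p - 1/2 = IZR z.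
Proof. rewrite on_line_iff, tt_L3. tauto. Qed.

Lemma nL1 p : (forall z, fst p <> IZR z) -> ~ on_line L1 p.
Proof. intros H Hp. apply onL1 in Hp. destruct Hp as [z Hz]. eapply H; eauto. Qed.

Lemma d12 : ~ same_toric_line L1 L2.
Proof.
  intros H. assert (A : on_line L2 (0, 1/2)) by (apply H, onL1; exists 0%Z; reflexivity).
  apply onL2 in A. destruct A as [z Hz]. simpl in Hz. apply (no_half z 0). rewrite <- Hz. simpl. lra.
Qed.
Lemma d13 m : ~ same_toric_line L1 (L3 m).
Proof.
  intros H. assert (A : on_line (L3 m) (0, 0)) by (apply H, onL1; exists 0%Z; reflexivity).
  apply onL3 in A. destruct A as [z Hz]. simpl in Hz. rewrite Rmult_0_r in Hz. apply (no_half 0 z). simpl. lra.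
Qed.
Lemma d23 m : ~ same_toric_line L2 (L3 m).
Proof.
  intros H. assert (A : on_line (L3 m) (0, 0)) by (apply H, onL2; exists 0%Z; reflexivity).
  apply onL3 in A. destruct A as [z Hz]. simpl in Hz. rewrite Rmult_0_r in Hz. apply (no_half 0 z). simpl. lra.
Qed.

Lemma same_refl l : same_toric_line l l.
Proof. intro; tauto. Qed.

Lemma arr_ok m : toric_arrangement (Arr m).
Proof.
  split.
  - unfold distinct_lines, Arr. constructor.
    + constructor; [apply d12|constructor; [apply d13|constructor]].
    + constructor. constructor; [apply d23|constructor]. constructor; constructor.
  - exists L1, L2. split; [left; auto|split; [right; left; auto|]].
    unfold same_type; simpl. lia.
Qed.

Definition h (m j : nat) : pt := (0, (INR j + 1/2) / INR m).

Definition vreps (m : nat) : list pt := (0, 0) :: (1/2, 0) :: map (h m) (seq 0 m).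

Lemma tor_x p q : tor_eq p q -> exists z, fst p = fst q + IZR z.
Proof. intros [a [b ->]]. exists a. reflexivity. Qed.
Lemma tor_y p q : tor_eq p q -> exists z, snd p = snd q + IZR z.
Proof. intros [a [b ->]]. exists b. reflexivity. Qed.

Lemma h_y m j z : (j < m)%nat -> (INR j + 1/2) / INR m = IZR z -> False.
Proof.
  intros Hj E. assert (Hm : 0 < INR m) by (apply lt_0_INR; lia).
  assert (E2 : INR j + 1/2 = IZR z * INR m) by (rewrite <- E; field; lra).
  rewrite !INR_IZR_INZ, <- mult_IZR in E2. apply (no_half (z * Z.of_nat m) (Z.of_nat j)). lra.
Qed.

Lemma vreps_vertex m : Forall (vertex (Arr m)) (vreps m).
Proof.
  unfold vreps. constructor; [|constructor].
  - exists L1, L2. repeat split; [left|right;left|apply d12| |]; auto.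
    + apply onL1. exists 0%Z. reflexivity.
    + apply onL2. exists 0%Z. reflexivity.
  - exists L2, (L3 m). repeat split; [right;left|right;right;left|apply d23| |]; auto.
    + apply onL2. exists 0%Z. reflexivity.
    + apply onL3. exists 0%Z. simpl. lra.
  - apply Forall_forall. intros x Hx. apply in_map_iff in Hx. destruct Hx as [j [<- Hj]].
    apply in_seq in Hj. assert (Hm : 0 < INR m) by (apply lt_0_INR; lia).
    exists L1, (L3 m). repeat split; [left|right;right;left|apply d13| |]; auto.
    + apply onL1. exists 0%Z. reflexivity.
    + apply onL3. exists (Z.of_nat j). unfold h; simpl. rewrite <- !INR_IZR_INZ. field. lra.
Qed.

Lemma vreps_distinct m : ForallOrdPairs (fun x y => ~ tor_eq x y) (vreps m).
Proof.
  unfold vreps. constructor; [|constructor].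
  - constructor.
    + intros H. apply tor_x in H. destruct H as [z Hz]. simpl in Hz.
      apply (no_half (-z) 0). rewrite opp_IZR. simpl. lra.
    + apply Forall_forall. intros x Hx. apply in_map_iff in Hx. destruct Hx as [j [<- Hj]].
      apply in_seq in Hj. intros H. apply tor_y in H. destruct H as [z Hz]. unfold h in Hz; simpl in Hz.
      apply (h_y m j (-z)); [lia|]. rewrite opp_IZR. lra.
  - apply Forall_forall. intros x Hx. apply in_map_iff in Hx. destruct Hx as [j [<- Hj]].
    intros H. apply tor_x in H. destruct H as [z Hz]. unfold h in Hz; simpl in Hz.
    apply (no_half z 0). simpl. lra.
  - apply FOP_map_seq. intros i j _ Hij Hj H. apply tor_y in H. destruct H as [z Hz].
    unfold h in Hz; simpl in Hz. assert (Hm : 0 < INR m) by (apply lt_0_INR; lia).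
    assert (E : INR i + 1/2 = INR j + 1/2 + IZR z * INR m).
    { replace (INR i + 1/2) with ((INR i + 1/2) / INR m * INR m) by (field; lra).
      rewrite Hz. field. lra. }
    rewrite !INR_IZR_INZ in E. rewrite <- mult_IZR in E.
    assert (E2 : IZR (Z.of_nat i) = IZR (Z.of_nat j + z * Z.of_nat m)) by (rewrite plus_IZR; set (A1 := IZR (Z.of_nat i)) in *; set (A2 := IZR (Z.of_nat j)) in *; set (A3 := IZR (z * Z.of_nat m)) in *; clearbody A1 A2 A3; lra).
    apply eq_IZR in E2. destruct (Z_lt_le_dec z 0); nia.
Qed.


Lemma c12 m x y : on_line L1 (x, y) -> on_line L2 (x, y) -> exists q, In q (vreps m) /\ tor_eq (x, y) q.
Proof.
  intros H1 H2. apply onL1 in H1. apply onL2 in H2. destruct H1 as [a Ha], H2 as [b Hb]. simpl in *.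
  exists (0, 0). split; [left; auto|]. exists a, b. unfold shift; simpl. subst. f_equal; ring.
Qed.

Lemma c23 m x y : on_line L2 (x, y) -> on_line (L3 m) (x, y) -> exists q, In q (vreps m) /\ tor_eq (x, y) q.
Proof.
  intros H1 H2. apply onL2 in H1. apply onL3 in H2. destruct H1 as [b Hb], H2 as [c Hc]. simpl in *.
  exists (1/2, 0). split; [right; left; auto|]. exists (c - Z.of_nat m * b)%Z, b. unfold shift; simpl.
  subst y. rewrite minus_IZR, mult_IZR. f_equal; [|ring].
  set (P := IZR (Z.of_nat m) * IZR b) in *. set (C := IZR c) in *. clearbody P C. lra.
Qed.

Lemma c13 m x y : on_line L1 (x, y) -> on_line (L3 m) (x, y) -> exists q, In q (vreps m) /\ tor_eq (x, y) q.
Proof.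
  intros H1 H2. apply onL1 in H1. apply onL3 in H2. destruct H1 as [a Ha], H2 as [c Hc]. simpl in *.
  subst x. destruct m as [|m'].
  - exfalso. simpl in Hc. apply (no_half a c). lra.
  - set (M := Z.of_nat (S m')) in *. assert (HM : (0 < M)%Z) by (unfold M; lia).
    set (t := (c - a)%Z). set (j := (t mod M)%Z). set (qq := (t / M)%Z).
    assert (Ht : t = (M * qq + j)%Z) by (apply Z.div_mod; lia).
    assert (Hj : (0 <= j < M)%Z) by (apply Z.mod_pos_bound; lia).
    exists (h (S m') (Z.to_nat j)). split.
    + right; right. apply in_map. apply in_seq. unfold M in Hj. lia.
    + exists a, qq. unfold shift, h; cbn [fst snd]. f_equal; [ring|].
      rewrite INR_IZR_INZ, Z2Nat.id by lia. rewrite (INR_IZR_INZ (S m')). fold M.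
      assert (HMr : 0 < IZR M) by (apply IZR_lt; auto).
      assert (E : IZR M * y = IZR t + 1/2).
      { unfold t. rewrite minus_IZR. set (P := IZR M * y) in *. set (A := IZR a) in *. clearbody P A. lra. }
      rewrite Ht, plus_IZR, mult_IZR in E.
      apply (Rmult_eq_reg_l (IZR M)); [|lra]. rewrite E. field. lra.
Qed.

Lemma f0_Arr m : f0_is (Arr m) (m + 2).
Proof.
  exists (vreps m). split; [|split; [apply vreps_vertex|split; [apply vreps_distinct|]]].
  - unfold vreps. simpl. rewrite length_map, length_seq. lia.
  - intros [x y] [l [l' [Hl [Hl' [Hne [Ho Ho']]]]]].
    simpl in Hl, Hl'.
    destruct Hl as [<-|[<-|[<-|[]]]]; destruct Hl' as [<-|[<-|[<-|[]]]];
      try (exfalso; apply Hne, same_refl).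
    + apply c12; auto.
    + apply c13; auto.
    + apply c12; auto.
    + apply c23; auto.
    + apply c13; auto.
    + apply c23; auto.
Qed.

Lemma backward f0 : (2 <= f0)%nat -> exists A : list line, toric_arrangement A /\ length A = 3%nat /\
     f0_is A f0 /\ f2_is A f0.
Proof.
  intros H. exists (Arr (f0 - 2)). split; [apply arr_ok|split; [reflexivity|]].
  assert (E : f0 = ((f0 - 2) + 2)%nat) by lia.
  pose proof (f0_Arr (f0 - 2)). pose proof (f2_Arr (f0 - 2)). rewrite <- E in *. auto.
Qed.


Definition det (l l' : line) : Z := (la l * lb l' - la l' * lb l)%Z.

Lemma det_anti l l' : det l' l = (- det l l')%Z.
Proof. unfold det; ring. Qed.

Lemma lne0 l : ~ (la l = 0%Z /\ lb l = 0%Z).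
Proof. intros [H1 H2]. pose proof (lcop l) as C. rewrite H1, H2 in C. discriminate. Qed.

Lemma prim l l' : det l l' = 0%Z ->
  (la l' = la l /\ lb l' = lb l) \/ (la l' = (- la l)%Z /\ lb l' = (- lb l)%Z).
Proof.
  unfold det. intros D. pose proof (lcop l) as C. pose proof (lcop l') as C'.
  pose proof (lne0 l) as N.
  set (a := la l) in *. set (b := lb l) in *. set (a' := la l') in *. set (b' := lb l') in *.
  assert (H1 : (a | a')%Z). { apply (Z.gauss a b a'); auto. exists b'. lia. }
  assert (H2 : (a' | a)%Z). { apply (Z.gauss a' b' a); auto. exists b. lia. }
  assert (H3 : (b | b')%Z). { apply (Z.gauss b a b'); [|rewrite Z.gcd_comm; auto]. exists a'. lia. }
  assert (H4 : (b' | b)%Z). { apply (Z.gauss b' a' b); [|rewrite Z.gcd_comm; auto]. exists a. lia. }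
  apply Z.divide_antisym_abs in H1; auto. apply Z.divide_antisym_abs in H3; auto.
  assert (E1 : a' = a \/ a' = (- a)%Z) by lia.
  assert (E2 : b' = b \/ b' = (- b)%Z) by lia.
  clearbody a b a' b'.
  destruct E1 as [-> | ->], E2 as [-> | ->]; auto.
  - assert (a * b = 0)%Z by nia. destruct (Z.eq_dec a 0); [right; lia|left; nia].
  - assert (a * b = 0)%Z by nia. destruct (Z.eq_dec a 0); [left; lia|right; nia].
Qed.

Lemma same_type_det l l' : same_type l l' <-> det l l' = 0%Z.
Proof.
  split.
  - unfold det. intros [[E1 E2]|[E1 E2]]; rewrite E1, E2; ring.
  - intros D. destruct (prim l l' D) as [[E1 E2]|[E1 E2]]; unfold same_type.
    + left; split; congruence.
    + right; split; lia.
Qed.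

Lemma same_type_refl l : same_type l l.
Proof. left; auto. Qed.
Lemma same_type_sym l l' : same_type l l' -> same_type l' l.
Proof. unfold same_type; intros [[]|[]]; [left|right]; lia. Qed.
Lemma same_type_trans l l' l'' : same_type l l' -> same_type l' l'' -> same_type l l''.
Proof. unfold same_type; intros [[]|[]] [[]|[]]; [left|right|right|left]; lia. Qed.

Lemma allsame l1 l2 l3 : same_type l1 l2 -> same_type l1 l3 -> ~ essential (l1 :: l2 :: l3 :: nil).
Proof.
  intros H12 H13 [l [l' [Hl [Hl' N]]]]. apply N.
  assert (K : forall x, In x (l1 :: l2 :: l3 :: nil) -> same_type l1 x).
  { intros x [<-|[<-|[<-|[]]]]; auto using same_type_refl. }
  apply (same_type_trans l l1 l'); [apply same_type_sym|]; auto.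
Qed.

Lemma not_same_sym l l' : ~ same_toric_line l l' -> ~ same_toric_line l' l.
Proof. intros N S. apply N. intros p. rewrite (S p). tauto. Qed.

Lemma det0_same l l' p0 : det l l' = 0%Z -> on_line l p0 -> on_line l' p0 -> same_toric_line l l'.
Proof.
  intros D H H'. apply on_line_iff in H, H'. destruct H as [z Hz], H' as [z' Hz'].
  destruct (prim l l' D) as [[E1 E2]|[E1 E2]].
  - assert (K : forall p, tt l' p = tt l p + (tt l' p0 - tt l p0)).
    { intros p. unfold tt. rewrite E1, E2. ring. }
    intros p. rewrite !on_line_iff. rewrite K, Hz, Hz'. split; intros [w Hw].
    + exists (w + (z' - z))%Z. rewrite plus_IZR, minus_IZR. lra.
    + exists (w - (z' - z))%Z. rewrite !minus_IZR. lra.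
  - assert (K : forall p, tt l' p = - tt l p + (tt l' p0 + tt l p0)).
    { intros p. unfold tt. rewrite E1, E2, !opp_IZR. ring. }
    intros p. rewrite !on_line_iff. rewrite K, Hz, Hz'. split; intros [w Hw].
    + exists (- w + (z' + z))%Z. rewrite plus_IZR, opp_IZR, plus_IZR. lra.
    + exists (- w + (z' + z))%Z. rewrite plus_IZR, opp_IZR, plus_IZR. lra.
Qed.

Lemma intersect l l' : det l l' <> 0%Z -> exists p, on_line l p /\ on_line l' p.
Proof.
  intros D. assert (Dr : IZR (det l l') <> 0) by (apply not_0_IZR; auto).
  unfold det in Dr. rewrite minus_IZR, !mult_IZR in Dr.
  exists ((lc l * IZR (lb l') - lc l' * IZR (lb l)) / (IZR (la l) * IZR (lb l') - IZR (la l') * IZR (lb l)),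
          (IZR (la l) * lc l' - IZR (la l') * lc l) / (IZR (la l) * IZR (lb l') - IZR (la l') * IZR (lb l))).
  split; apply on_line_iff; exists 0%Z; unfold tt; cbn [fst snd]; field; auto.
Qed.

Lemma tor_on l p q : tor_eq p q -> on_line l q -> on_line l p.
Proof. intros [m [n ->]] H. apply on_line_shift; auto. Qed.
Lemma tor_on' l p q : tor_eq p q -> on_line l p -> on_line l q.
Proof. intros [m [n ->]] H. apply on_line_shift in H; auto. Qed.

Lemma f0_one A : f0_is A 1 -> exists r0, forall p, vertex A p -> tor_eq p r0.
Proof.
  intros [s [Ls [_ [_ Cov]]]]. destruct s as [|r0 [|]]; try discriminate.
  exists r0. intros p Hp. destruct (Cov p Hp) as [q [[<-|[]] E]]. auto.
Qed.

Lemma parallel A l l' l'' r0 : In l A -> In l' A -> In l'' A ->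
  ~ same_toric_line l l' -> ~ same_toric_line l l'' -> ~ same_toric_line l' l'' ->
  det l l' = 0%Z -> det l l'' <> 0%Z -> det l' l'' <> 0%Z ->
  (forall p, vertex A p -> tor_eq p r0) -> False.
Proof.
  intros I I' I'' N1 N2 N3 D1 D2 D3 V.
  destruct (intersect l l'' D2) as [p [Hp Hp'']].
  destruct (intersect l' l'' D3) as [q [Hq Hq'']].
  assert (Tp := V p (ex_intro _ l (ex_intro _ l'' (conj I (conj I'' (conj N2 (conj Hp Hp'')))))) ).
  assert (Tq := V q (ex_intro _ l' (ex_intro _ l'' (conj I' (conj I'' (conj N3 (conj Hq Hq'')))))) ).
  assert (R0 : on_line l' r0) by (eapply tor_on'; eauto).
  assert (Hp' : on_line l' p) by (eapply tor_on; eauto).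
  apply N1. eapply det0_same; eauto.
Qed.


Lemma fl_tt_shift' l p a b : fl (tt l (shift p a b)) = (fl (tt l p) + (la l * a + lb l * b))%Z.
Proof. rewrite tt_shift, fl_shift. reflexivity. Qed.

Lemma zb_pos D P K N s : (s = 1 \/ s = -1)%Z -> (0 < D < N)%Z -> (Z.abs P < K)%Z ->
  (0 < 4 * K * D + s * P < 16 * N * K)%Z.
Proof. intros [-> | ->] HD HP; destruct (Z.abs_spec P) as [[? E]|[? E]]; rewrite E in HP; nia. Qed.

Lemma zb_neg D P K N s : (s = 1 \/ s = -1)%Z -> (- N < D < 0)%Z -> (Z.abs P < K)%Z ->
  (- (16 * N * K) < 4 * K * D + s * P < 0)%Z.
Proof. intros [-> | ->] HD HP; destruct (Z.abs_spec P) as [[? E]|[? E]]; rewrite E in HP; nia. Qed.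

Lemma frac_pos z n M : (0 < n < M)%Z -> IZR z < IZR z + IZR n / IZR M < IZR z + 1.
Proof.
  intros [H1 H2]. apply IZR_lt in H1. apply IZR_lt in H2.
  assert (IZR n / IZR M * IZR M = IZR n) by (field; lra).
  assert (0 < IZR n / IZR M) by (apply Rdiv_lt_0_compat; lra).
  assert (IZR n / IZR M < 1) by nra. lra.
Qed.

Lemma frac_neg z n M : (- M < n < 0)%Z -> IZR (z - 1) < IZR z + IZR n / IZR M < IZR (z - 1) + 1.
Proof.
  intros [H1 H2]. assert (0 < M)%Z by lia. rewrite minus_IZR.
  apply IZR_lt in H1. apply IZR_lt in H2. rewrite opp_IZR in H1.
  assert (0 < IZR M) by (apply IZR_lt; lia).
  assert (IZR n / IZR M * IZR M = IZR n) by (field; lra).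
  assert (IZR n / IZR M < 0).
  { unfold Rdiv. apply Rmult_neg_pos; [lra| apply Rinv_0_lt_compat; lra]. }
  assert (-1 < IZR n / IZR M) by nra. simpl. lra.
Qed.

Definition Kc (l1 l2 l3 : line) : Z := (1 + Z.abs (la l1 * la l3 + lb l1 * lb l3) + Z.abs (la l2 * la l3 + lb l2 * lb l3)
   + (la l3 * la l3 + lb l3 * lb l3))%Z.
Definition Nc (l1 l2 l3 : line) : Z := (1 + Z.abs (det l1 l3) + Z.abs (det l2 l3))%Z.
Definition Mc (l1 l2 l3 : line) : Z := (16 * Nc l1 l2 l3 * Kc l1 l2 l3)%Z.

Definition qs (l1 l2 l3 : line) (r0 : pt) (s : Z) : pt :=
  (fst r0 + IZR (4 * Kc l1 l2 l3 * lb l3 + s * la l3) / IZR (Mc l1 l2 l3),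
   snd r0 + IZR (- 4 * Kc l1 l2 l3 * la l3 + s * lb l3) / IZR (Mc l1 l2 l3)).

Lemma P3pos (l3 : line) : (0 < la l3 * la l3 + lb l3 * lb l3)%Z.
Proof.
  pose proof (lne0 l3). destruct (Z.eq_dec (la l3) 0); destruct (Z.eq_dec (lb l3) 0); try tauto; nia.
Qed.

Lemma Kpos l1 l2 l3 : (0 < Kc l1 l2 l3)%Z.
Proof. pose proof (P3pos l3). unfold Kc. lia. Qed.
Lemma Mpos l1 l2 l3 : (0 < Mc l1 l2 l3)%Z.
Proof. pose proof (Kpos l1 l2 l3). unfold Mc, Nc. lia. Qed.

Lemma tt_qs l1 l2 l3 r0 l s : tt l (qs l1 l2 l3 r0 s) = tt l r0 +
   IZR (4 * Kc l1 l2 l3 * det l l3 + s * (la l * la l3 + lb l * lb l3)) / IZR (Mc l1 l2 l3).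
Proof.
  assert (HM : IZR (Mc l1 l2 l3) <> 0) by (apply not_0_IZR; pose proof (Mpos l1 l2 l3); lia).
  replace (4 * Kc l1 l2 l3 * det l l3 + s * (la l * la l3 + lb l * lb l3))%Z with
    (la l * (4 * Kc l1 l2 l3 * lb l3 + s * la l3) + lb l * (- 4 * Kc l1 l2 l3 * la l3 + s * lb l3))%Z by (unfold det; ring).
  rewrite plus_IZR, !mult_IZR. unfold tt, qs; cbn [fst snd]. field. auto.
Qed.

Lemma strict_line l1 l2 l3 r0 l z : tt l r0 = IZR z -> det l l3 <> 0%Z ->
  (Z.abs (det l l3) < Nc l1 l2 l3)%Z -> (Z.abs (la l * la l3 + lb l * lb l3) < Kc l1 l2 l3)%Z ->
  exists f, forall s, (s = 1 \/ s = -1)%Z ->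
    IZR f < tt l (qs l1 l2 l3 r0 s) < IZR f + 1.
Proof.
  intros Hz D HN HK. destruct (Z_lt_le_dec 0 (det l l3)) as [Dp|Dn].
  - exists z. intros s Hs. rewrite tt_qs, Hz. apply frac_pos.
    unfold Mc. apply zb_pos; auto. lia.
  - exists (z - 1)%Z. intros s Hs. rewrite tt_qs, Hz. apply frac_neg.
    unfold Mc. apply zb_neg; auto. lia.
Qed.

Lemma conc l1 l2 l3 r0 : det l1 l2 <> 0%Z -> det l1 l3 <> 0%Z -> det l2 l3 <> 0%Z ->
  on_line l1 r0 -> on_line l2 r0 -> on_line l3 r0 -> f2_is (l1 :: l2 :: l3 :: nil) 1 -> False.
Proof.
  intros D12 D13 D23 O1 O2 O3 F2.
  set (A := l1 :: l2 :: l3 :: nil) in *.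
  set (G := fun p => (det l2 l3 * fl (tt l1 p) + det l3 l1 * fl (tt l2 p) + det l1 l2 * fl (tt l3 p))%Z).
  assert (Gsh : forall p m n, G (shift p m n) = G p).
  { intros p m n. unfold G. rewrite !fl_tt_shift'. unfold det. ring. }
  assert (Gfl : forall p q, (forall l, In l A -> fl (tt l q) = fl (tt l p)) -> G q = G p).
  { intros p q H. unfold G. rewrite (H l1), (H l2), (H l3); unfold A; simpl; auto. }
  apply on_line_iff in O1, O2, O3. destruct O1 as [z1 Z1], O2 as [z2 Z2], O3 as [z3 Z3].
  pose proof (P3pos l3) as P3.
  destruct (strict_line l1 l2 l3 r0 l1 z1 Z1 D13) as [f1 F1]; [unfold Nc; lia|unfold Kc; lia|].
  destruct (strict_line l1 l2 l3 r0 l2 z2 Z2 D23) as [f2 F2']; [unfold Nc; lia|unfold Kc; lia|].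
  assert (Hd33 : det l3 l3 = 0%Z) by (unfold det; ring).
  assert (KP : (la l3 * la l3 + lb l3 * lb l3 < Kc l1 l2 l3)%Z) by (unfold Kc; lia).
  assert (NP : (1 <= Nc l1 l2 l3)%Z) by (unfold Nc; lia).
  assert (T3p : IZR z3 < tt l3 (qs l1 l2 l3 r0 1) < IZR z3 + 1).
  { rewrite tt_qs, Z3, Hd33. apply frac_pos. unfold Mc. clear -KP NP P3. nia. }
  assert (T3n : IZR (z3 - 1) < tt l3 (qs l1 l2 l3 r0 (-1)) < IZR (z3 - 1) + 1).
  { rewrite tt_qs, Z3, Hd33. apply frac_neg. unfold Mc. clear -KP NP P3. nia. }
  assert (Cp : in_compl A (qs l1 l2 l3 r0 1)).
  { intros l [<-|[<-|[<-|[]]]] Hon; apply on_line_iff in Hon; destruct Hon as [w Hw].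
    - apply (int_between f1 w _ (F1 1%Z ltac:(lia)) Hw).
    - apply (int_between f2 w _ (F2' 1%Z ltac:(lia)) Hw).
    - eapply int_between; [apply T3p|eauto]. }
  assert (Cn : in_compl A (qs l1 l2 l3 r0 (-1))).
  { intros l [<-|[<-|[<-|[]]]] Hon; apply on_line_iff in Hon; destruct Hon as [w Hw].
    - apply (int_between f1 w _ (F1 (-1)%Z ltac:(lia)) Hw).
    - apply (int_between f2 w _ (F2' (-1)%Z ltac:(lia)) Hw).
    - eapply int_between; [apply T3n|eauto]. }
  assert (Gd : (G (qs l1 l2 l3 r0 1) - G (qs l1 l2 l3 r0 (-1)) = det l1 l2)%Z).
  { unfold G.
    rewrite (fl_unique f1 (tt l1 (qs l1 l2 l3 r0 1))) by (pose proof (F1 1%Z ltac:(lia)); lra).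
    rewrite (fl_unique f1 (tt l1 (qs l1 l2 l3 r0 (-1)))) by (pose proof (F1 (-1)%Z ltac:(lia)); lra).
    rewrite (fl_unique f2 (tt l2 (qs l1 l2 l3 r0 1))) by (pose proof (F2' 1%Z ltac:(lia)); lra).
    rewrite (fl_unique f2 (tt l2 (qs l1 l2 l3 r0 (-1)))) by (pose proof (F2' (-1)%Z ltac:(lia)); lra).
    rewrite (fl_unique z3 (tt l3 (qs l1 l2 l3 r0 1))) by lra.
    rewrite (fl_unique (z3 - 1) (tt l3 (qs l1 l2 l3 r0 (-1)))) by lra.
    ring. }
  destruct F2 as [s [Ls [_ [_ Cov]]]]. destruct s as [|q0 [|]]; try discriminate.
  destruct (Cov _ Cp) as [q [[<-|[]] [S1 [c1 [s1 [a1 b1]]]]]].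
  destruct (Cov _ Cn) as [q [[<-|[]] [S2 [c2 [s2 [a2 b2]]]]]].
  pose proof (sep A G Gsh Gfl S1 _ _ c1 s1 a1 b1).
  pose proof (sep A G Gsh Gfl S2 _ _ c2 s2 a2 b2).
  lia.
Qed.


Lemma forward A : toric_arrangement A -> length A = 3%nat -> f0_is A 1 -> f2_is A 1 -> False.
Proof.
  intros [Dl Es] L F0 F2.
  destruct A as [|l1 [|l2 [|l3 [|]]]]; try discriminate.
  unfold distinct_lines in Dl.
  inversion Dl as [|? ? Fa Dl2]; subst. inversion Dl2 as [|? ? Fb _]; subst.
  inversion Fa as [|? ? n12 Fa']; subst. inversion Fa' as [|? ? n13 _]; subst.
  inversion Fb as [|? ? n23 _]; subst.
  destruct (f0_one _ F0) as [r0 V].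
  assert (I1 : In l1 (l1 :: l2 :: l3 :: nil)) by (simpl; auto).
  assert (I2 : In l2 (l1 :: l2 :: l3 :: nil)) by (simpl; auto).
  assert (I3 : In l3 (l1 :: l2 :: l3 :: nil)) by (simpl; auto).
  destruct (Z.eq_dec (det l1 l2) 0) as [e12|e12].
  - destruct (Z.eq_dec (det l1 l3) 0) as [e13|e13].
    + apply (allsame l1 l2 l3); auto; apply same_type_det; auto.
    + destruct (Z.eq_dec (det l2 l3) 0) as [e23|e23].
      * apply (allsame l1 l2 l3); auto. apply same_type_det; auto.
        apply (same_type_trans _ l2); apply same_type_det; auto.
      * apply (parallel (l1 :: l2 :: l3 :: nil) l1 l2 l3 r0); auto.
  - destruct (Z.eq_dec (det l1 l3) 0) as [e13|e13].
    + destruct (Z.eq_dec (det l2 l3) 0) as [e23|e23].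
      * apply (allsame l1 l2 l3); auto; [|apply same_type_det; auto].
        apply (same_type_trans _ l3); [apply same_type_det; auto|].
        apply same_type_sym, same_type_det; auto.
      * apply (parallel (l1 :: l2 :: l3 :: nil) l1 l3 l2 r0); auto.
        -- apply not_same_sym; auto.
        -- rewrite det_anti. lia.
    + destruct (Z.eq_dec (det l2 l3) 0) as [e23|e23].
      * apply (parallel (l1 :: l2 :: l3 :: nil) l2 l3 l1 r0); auto.
        -- apply not_same_sym; auto.
        -- apply not_same_sym; auto.
        -- rewrite det_anti. lia.
        -- rewrite det_anti. lia.
      * destruct (intersect l1 l2 e12) as [p [H1 H2]].
        destruct (intersect l1 l3 e13) as [q [K1 K3]].
        assert (Tp := V p (ex_intro _ l1 (ex_intro _ l2 (conj I1 (conj I2 (conj n12 (conj H1 H2))))))).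
        assert (Tq := V q (ex_intro _ l1 (ex_intro _ l3 (conj I1 (conj I3 (conj n13 (conj K1 K3))))))).
        apply (conc l1 l2 l3 r0); auto.
        -- apply (tor_on' l1 p r0 Tp H1).
        -- apply (tor_on' l2 p r0 Tp H2).
        -- apply (tor_on' l3 q r0 Tq K3).
Qed.

Theorem mainTheorem7 (f0 : nat) (hf0 : (1 <= f0)%nat) :
  (exists A : list line, toric_arrangement A /\ length A = 3%nat /\
     f0_is A f0 /\ f2_is A f0) <-> (2 <= f0)%nat.
Proof.
  split.
  - intros [A [T [L [F0 F2]]]]. destruct (Nat.eq_dec f0 1) as [->|n]; [|lia].
    exfalso. apply (forward A); auto.
  - apply backward.
Qed.
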